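(* For every $n\in\mathbb{N}$ let $M_n\in\mathcal{M}_n$ be fixed and let $H_n$ be a uniformly random element of $\mathcal{M}_n$. Then for every $\eta>0$, $\lim_{n\to\infty}\mathbb{P}\big(|d_M(M_n,H_n)-\mathbb{E}(d_M(M_n,H_n))|>\eta\big)=0$.
   Context: $\mathcal{M}_n$ is the set of $n\times n$ real matrices with all entries in $\{n^{-1/2},-n^{-1/2}\}$. A matrix $A$ is regarded as an operator $v\mapsto vA$ on functions on $[n]$ with the uniform probability measure. $\mathcal{S}_k(A)$ is the set of joint distributions on $\mathbb{R}^{2k}$ of $(v_1,\dots,v_k,v_1A,\dots,v_kA)$ over $v_i:[n]\to[-1,1]$; $d_M(A,B)=\sum_k2^{-k}d_H(\mathcal{S}_k(A),\mathcal{S}_k(B))$ with $d_H$ the Hausdorff distance induced by the Lévy–Prokhorov metric. *)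

(* Defs.v *)
From HB Require Import structures.
From mathcomp Require Import all_boot all_order all_algebra.
From mathcomp Require Import all_classical all_reals all_analysis.
Set Implicit Arguments. Unset Strict Implicit. Unset Printing Implicit Defensive.
Import Order.TTheory GRing.Theory Num.Theory.
Import numFieldNormedType.Exports.
Local Open Scope classical_set_scope.
Local Open Scope ring_scope.

Section Defs.
Variable R : realType.

Definition eucl (m : nat) (x y : 'rV[R]_m) : R :=
  Num.sqrt (\sum_(i < m) (x 0 i - y 0 i) ^+ 2).

Definition nbhd_set (m : nat) (U : set 'rV[R]_m) (e : R) : set 'rV[R]_m :=
  [set x | exists2 y, U y & eucl x y < e].

(* Law of a random point x(j), j uniform on [n]: a set function
   (the law of a finitely supported probability measure; it is defined
   on every subset of R^m). *)
Definition empirical (n m : nat) (x : 'I_n -> 'rV[R]_m) : set 'rV[R]_m -> R :=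
  fun U => #|[pred j | `[< U (x j) >] ]|%:R / n%:R.

Definition dLP (m : nat) (mu nu : set 'rV[R]_m -> R) : R :=
  inf [set e : R | 0 < e /\
        forall U : set 'rV[R]_m,
          mu U <= nu (nbhd_set U e) + e /\ nu U <= mu (nbhd_set U e) + e].

Definition dH (m : nat) (S T : set (set 'rV[R]_m -> R)) : R :=
  Num.max (sup [set inf [set dLP mu nu | nu in T] | mu in S])
          (sup [set inf [set dLP mu nu | mu in S] | nu in T]).

(* Rows of V are v_1..v_k : [n] -> [-1,1];
   the rows of V *m A are v_1 A, ..., v_k A, where (vA)(j) = sum_i v(i) A(i,j).
   The point attached to j in [n] is (v_1(j),..,v_k(j),(v_1A)(j),..,(v_kA)(j)). *)
Definition profile_pt (n k : nat) (A : 'M[R]_n) (V : 'M[R]_(k, n)) (j : 'I_n)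
  : 'rV[R]_(k + k) := row_mx (col j V)^T (col j (V *m A))^T.

Definition Sk (n : nat) (A : 'M[R]_n) (k : nat) : set (set 'rV[R]_(k + k) -> R) :=
  [set empirical (profile_pt A V) |
     V in [set V : 'M[R]_(k, n) | forall i j, -1 <= V i j <= 1]].

Definition dM (n : nat) (A B : 'M[R]_n) : R :=
  limn (series (fun k : nat =>
           (2 : R) ^- k.+1 * dH (@Sk n A k.+1) (@Sk n B k.+1))).

Definition inMn (n : nat) (A : 'M[R]_n) : Prop :=
  forall i j, A i j = (Num.sqrt n%:R)^-1 \/ A i j = - (Num.sqrt n%:R)^-1.

(* sign pattern s |-> element of M_n (a bijection onto M_n) *)
Definition signmx (n : nat) (s : 'M[bool]_n) : 'M[R]_n :=
  \matrix_(i, j) ((if s i j then 1 else -1) * (Num.sqrt n%:R)^-1).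

Definition E_dM (n : nat) (A : 'M[R]_n) : R :=
  (\sum_(s : 'M[bool]_n) dM A (signmx s)) / #|{: 'M[bool]_n}|%:R.

Definition P_dev (n : nat) (A : 'M[R]_n) (eta : R) : R :=
  #|[pred s : 'M[bool]_n | eta < `|dM A (signmx s) - E_dM A| ]|%:R
    / #|{: 'M[bool]_n}|%:R.

End Defs.

(* Main.v *)
Require Import Defs.
From HB Require Import structures.
From mathcomp Require Import all_boot all_order all_algebra.
From mathcomp Require Import all_classical all_reals all_analysis.
From mathcomp Require Import ring lra.
Import Order.TTheory GRing.Theory Num.Theory.
Import numFieldNormedType.Exports.
Local Open Scope classical_set_scope.
Local Open Scope ring_scope.
Set Implicit Arguments. Unset Strict Implicit. Unset Printing Implicit Defensive.
Section Var.
Variable R : realType.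

Definition bdiff n m (f : 'M[bool]_(n,m) -> R) (c : R) :=
  forall (s s' : 'M[bool]_(n,m)) (j0 : 'I_m), (forall i j, j != j0 -> s i j = s' i j) ->
    `|f s - f s'| <= c.

Definition meanT (T : finType) (f : T -> R) := (\sum_t f t) / #|{: T}|%:R.

Lemma sum_constT (T : finType) (x : R) : \sum_(t : T) x = #|{: T}|%:R * x.
Proof. by rewrite sumr_const mulr_natl. Qed.

Lemma cardT_neq0 (T : finType) (t : T) : #|{: T}|%:R != 0 :> R.
Proof.
by rewrite pnatr_eq0 -lt0n; apply/card_gt0P; exists t.
Qed.

Lemma mean_close (T : finType) (h1 h2 : T -> R) (c : R) (t0 : T) :
  (forall t, `|h1 t - h2 t| <= c) -> `|meanT h1 - meanT h2| <= c.
Proof.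
move=> H; rewrite /meanT -mulrBl -sumrB normrM.
have N0 := cardT_neq0 t0.
have Np : 0 < #|{: T}|%:R :> R by rewrite lt0r N0 ler0n.
rewrite [`|_^-1|]ger0_norm ?invr_ge0 ?ler0n //.
rewrite -ler_pdivlMr ?invr_gt0 // invrK.
apply: le_trans (ler_norm_sum _ _ _) _.
rewrite mulrC -sum_constT; apply: ler_sum => t _; exact: H.
Qed.

Lemma mean_const (T : finType) (x : R) (t0 : T) : meanT (fun _ : T => x) = x.
Proof.
by rewrite /meanT sum_constT mulrC mulKf // cardT_neq0.
Qed.


Lemma sum_rowmx n m (F : 'M[bool]_(n, 1 + m) -> R) :
  \sum_s F s = \sum_(a : 'M[bool]_(n,1)) \sum_(b : 'M[bool]_(n,m)) F (row_mx a b).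
Proof.
rewrite pair_big /=.
rewrite (reindex (fun p : 'M[bool]_(n,1) * 'M[bool]_(n,m) => row_mx p.1 p.2)) //=.
exists (fun s => (lsubmx s, rsubmx s)) => [[a b] _ | s _] /=.
  by rewrite row_mxKl row_mxKr.
by rewrite hsubmxK.
Qed.

Lemma var_step n m (c : R) : 0 <= c ->
  (forall g : 'M[bool]_(n,m) -> R, bdiff g c ->
     \sum_s (g s - meanT g) ^+ 2 <= m%:R * c ^+ 2 * #|{: 'M[bool]_(n,m)}|%:R) ->
  forall f : 'M[bool]_(n, 1 + m) -> R, bdiff f c ->
     \sum_s (f s - meanT f) ^+ 2 <= (1 + m)%:R * c ^+ 2 * #|{: 'M[bool]_(n,1 + m)}|%:R.
Proof.
move=> c0 IH f hf.
set N1 := #|{: 'M[bool]_(n,1)}|%:R : R.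
set Nm := #|{: 'M[bool]_(n,m)}|%:R : R.
have N1n : N1 != 0 := cardT_neq0 (0 : 'M[bool]_(n,1)).
have Nmn : Nm != 0 := cardT_neq0 (0 : 'M[bool]_(n,m)).
have card1m : #|{: 'M[bool]_(n,1 + m)}|%:R = N1 * Nm :> R.
  have /= := @sum_rowmx n m (fun _ => 1 : R).
  by rewrite sum_constT mulr1; under eq_bigr do rewrite sum_constT mulr1;
     rewrite sum_constT.
pose g a := meanT (fun b => f (row_mx a b)).
have mu_g : meanT f = meanT g.
  rewrite /meanT sum_rowmx card1m /g /meanT -mulr_suml invfM mulrA.
  by rewrite mulrAC.
set mu := meanT f.
have hg : forall a, `|g a - mu| <= c.
  move=> a; rewrite /mu mu_g -(mean_const (g a) a).
  apply: (mean_close a) => a'.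
  rewrite /= /g.
  apply: (mean_close 0) => b.
  apply: (hf _ _ (lshift m (0 : 'I_1))) => i j.
  case: (split_ordP j) => k -> {j}.
    by rewrite (ord1 k) eqxx.
  by rewrite !row_mxEr.
have hb : forall a, bdiff (fun b => f (row_mx a b)) c.
  move=> a b b' j0 hbb; apply: (hf _ _ (rshift 1 j0)) => i j.
  case: (split_ordP j) => k -> {j}; first by rewrite !row_mxEl.
  rewrite !row_mxEr => hk; apply: hbb; apply: contraNneq hk => ->.
  by [].
have ident : forall a, \sum_b (f (row_mx a b) - mu) ^+ 2 =
   \sum_b (f (row_mx a b) - g a) ^+ 2 + Nm * (g a - mu) ^+ 2.
  move=> a.
  have e0 : \sum_b (f (row_mx a b) - g a) = 0.
    rewrite sumrB sum_constT /g /meanT -/Nm.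
    by rewrite mulrC mulfVK // subrr.
  transitivity (\sum_b ((f (row_mx a b) - g a) ^+ 2 +
     2 * (g a - mu) * (f (row_mx a b) - g a) + (g a - mu) ^+ 2)).
    by apply: eq_bigr => b _; ring.
  rewrite !big_split /= -mulr_sumr e0 mulr0 addr0 sum_constT.
  done.
rewrite sum_rowmx card1m.
under eq_bigr do rewrite ident.
apply: le_trans (_ : \sum_(a : 'M[bool]_(n,1)) (m%:R * c ^+ 2 * Nm + Nm * c ^+ 2) <= _).
  apply: ler_sum => a _; apply: lerD; first exact: IH.
  rewrite ler_pM2l; last by rewrite lt0r Nmn ler0n.
  have /andP[h1 h2] : (- c <= g a - mu <= c) by rewrite -ler_norml; exact: hg.
  nra.
rewrite sum_constT natrD.
rewrite -/N1. 
have -> : N1 * (m%:R * c ^+ 2 * Nm + Nm * c ^+ 2) = (1 + m%:R) * c ^+ 2 * (N1 * Nm) by ring.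
done.
Qed.

Lemma var_bound n m (c : R) : 0 <= c ->
  forall f : 'M[bool]_(n,m) -> R, bdiff f c ->
     \sum_s (f s - meanT f) ^+ 2 <= m%:R * c ^+ 2 * #|{: 'M[bool]_(n,m)}|%:R.
Proof.
move=> c0; elim: m => [|m IH] f hf.
  have E0 : forall s : 'M[bool]_(n,0), s = 0.
    by move=> s; apply/matrixP => i [].
  rewrite mul0r mul0r.
  have -> : meanT f = f 0.
    rewrite /meanT (eq_bigr (fun _ => f 0)); last by move=> s _; rewrite (E0 s).
    by rewrite sum_constT mulrC mulKf // (cardT_neq0 (0 : 'M[bool]_(n,0))).
  rewrite big1 // => s _; rewrite (E0 s) subrr expr0n //.
exact: (var_step c0 IH).
Qed.

End Var.
Section LP.
Variable R : realType.

Definition good m (mu : set 'rV[R]_m -> R) :=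
  (forall U, 0 <= mu U <= 1) /\ (forall U W, U `<=` W -> mu U <= mu W).

Lemma empirical_good n m (x : 'I_n -> 'rV[R]_m) : good (empirical x).
Proof.
split.
  move=> U; rewrite /empirical; apply/andP; split.
    by rewrite divr_ge0 ?ler0n.
  have [n0|n0] := eqVneq n 0%N.
    have -> : n%:R = 0 :> R by rewrite n0.
    by rewrite invr0 mulr0.
  have np : 0 < n%:R :> R by rewrite ltr0n lt0n.
  rewrite ler_pdivrMr // mul1r ler_nat.
  by apply: leq_trans (max_card _) _; rewrite card_ord.
move=> U W UW; rewrite /empirical; apply: ler_wpM2r; first by rewrite invr_ge0 ler0n.
rewrite ler_nat; apply: subset_leq_card; apply/fintype.subsetP => j.
by rewrite !inE => h; apply: UW.
Qed.

Lemma empirical_shift n m (x x' : 'I_n -> 'rV[R]_m) (j0 : 'I_n) :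
  (forall j, j != j0 -> x j = x' j) ->
  forall U, empirical x U <= empirical x' U + n%:R^-1.
Proof.
move=> hx U; rewrite /empirical -[X in _ <= _ + X]mul1r -mulrDl natr1; apply: ler_wpM2r.
  by rewrite invr_ge0 ler0n.
rewrite ler_nat.
set P := [pred j | `[< U (x j) >]]; set P' := [pred j | `[< U (x' j) >]].
apply: (@leq_trans #|[predU pred1 j0 & P']|).
  apply: subset_leq_card; apply/fintype.subsetP => j; rewrite !inE.
  have [-> //|hj] := eqVneq j j0.
  by rewrite (hx j hj) => h; apply/asboolP.
have := cardUI (pred1 j0) P'; rewrite card1 add1n => <-; exact: leq_addr.
Qed.

Lemma nbhd_mono m (U : set 'rV[R]_m) e e' : e <= e' ->
  nbhd_set U e `<=` nbhd_set U e'.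
Proof. by move=> ee x [y Uy lt]; exists y => //; apply: lt_le_trans ee. Qed.

Lemma dLP_ge0 m (mu nu : set 'rV[R]_m -> R) : 0 <= dLP mu nu.
Proof.
rewrite /dLP; set E := [set e | _].
have [ne|ne] := pselect (E !=set0).
  by apply: lb_le_inf => // e [e0 _]; apply: ltW.
have -> : E = set0.
  by apply/seteqP; split => [e He|e []] //; exfalso; apply: ne; exists e.
by rewrite inf0.
Qed.

Lemma dLP_in1 m (mu nu : set 'rV[R]_m -> R) : good mu -> good nu ->
  [set e : R | 0 < e /\
        forall U : set 'rV[R]_m,
          mu U <= nu (nbhd_set U e) + e /\ nu U <= mu (nbhd_set U e) + e] 1.
Proof.
move=> [gm _] [gn _]; split => // U; split.
  have /andP[_ h1] := gm U; have /andP[h2 _] := gn (nbhd_set U 1); lra.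
have /andP[_ h1] := gn U; have /andP[h2 _] := gm (nbhd_set U 1); lra.
Qed.

Lemma dLP_le1 m (mu nu : set 'rV[R]_m -> R) : good mu -> good nu -> dLP mu nu <= 1.
Proof.
move=> gm gn; rewrite /dLP; apply: ge_inf; last exact: dLP_in1.
by exists 0 => e [e0 _]; apply: ltW.
Qed.

Lemma dLP_shift m (mu nu nu' : set 'rV[R]_m -> R) (d : R) :
  good mu -> good nu -> good nu' -> 0 <= d ->
  (forall U, nu' U <= nu U + d) -> (forall U, nu U <= nu' U + d) ->
  dLP mu nu' <= dLP mu nu + d.
Proof.
move=> gm gn gn' d0 h1 h2; rewrite /dLP -lerBlDr.
apply: lb_le_inf; first by exists 1; exact: dLP_in1.
move=> e [e0 he]; rewrite lerBlDr; apply: ge_inf.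
  by exists 0 => e' [e'0 _]; apply: ltW.
split; first by lra.
move=> U; have [ha hb] := he U.
have ee : e <= e + d by rewrite lerDl.
have mon1 := gn'.2 _ _ (nbhd_mono (U:=U) ee).
have mon2 := gm.2 _ _ (nbhd_mono (U:=U) ee).
have H1 := h2 (nbhd_set U e); have H2 := h1 U.
split; lra.
Qed.

Lemma inf_shift (X1 X2 : set R) (d : R) : X1 !=set0 -> has_lbound X2 ->
  (forall b, X1 b -> exists2 a, X2 a & a <= b + d) -> inf X2 <= inf X1 + d.
Proof.
move=> ne hl H; rewrite -lerBlDr; apply: lb_le_inf => // b /H [a Xa le].
by rewrite lerBlDr; apply: le_trans le; apply: ge_inf.
Qed.

Lemma sup_shift (X1 X2 : set R) (d : R) : X2 !=set0 -> has_ubound X1 ->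
  (forall a, X2 a -> exists2 b, X1 b & a <= b + d) -> sup X2 <= sup X1 + d.
Proof.
move=> ne hu H; apply: ge_sup => // a /H [b Xb le].
by apply: le_trans le _; rewrite lerD2r; apply: ub_le_sup.
Qed.

End LP.
Section DH.
Variable R : realType.

Lemma inf_dLP_bounds m (S : set (set 'rV[R]_m -> R)) (mu0 : set 'rV[R]_m -> R) (F : (set 'rV[R]_m -> R) -> R) :
  S mu0 -> (forall mu, S mu -> 0 <= F mu <= 1) ->
  0 <= inf [set F mu | mu in S] <= 1.
Proof.
move=> S0 hF; apply/andP; split.
  apply: lb_le_inf; first by exists (F mu0), mu0.
  by move=> _ [mu Smu <-]; have /andP[] := hF mu Smu.
apply: le_trans (_ : F mu0 <= 1); last by have /andP[] := hF mu0 S0.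
apply: ge_inf; last by exists mu0.
by exists 0 => _ [mu Smu <-]; have /andP[] := hF mu Smu.
Qed.

Lemma sup_bounds (X : set R) x0 : X x0 -> (forall x, X x -> 0 <= x <= 1) ->
  0 <= sup X <= 1.
Proof.
move=> X0 hX; apply/andP; split.
  have /andP[h _] := hX x0 X0; apply: le_trans h _.
  by apply: ub_le_sup => //; exists 1 => x /hX /andP[].
by apply: ge_sup; [exists x0 | move=> x /hX /andP[]].
Qed.

Lemma dH_bounds m (S T : set (set 'rV[R]_m -> R)) mu0 nu0 :
  S mu0 -> T nu0 -> (forall mu, S mu -> good mu) -> (forall nu, T nu -> good nu) ->
  0 <= dH S T <= 1.
Proof.
move=> S0 T0 gS gT.
have hdl mu nu : S mu -> T nu -> 0 <= dLP mu nu <= 1.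
  by move=> Smu Tnu; rewrite dLP_ge0 dLP_le1 //; [apply: gS | apply: gT].
have h1 : 0 <= sup [set inf [set dLP mu nu | nu in T] | mu in S] <= 1.
  apply: (sup_bounds (x0 := inf [set dLP mu0 nu | nu in T])); first by exists mu0.
  move=> _ [mu Smu <-]; apply: (inf_dLP_bounds T0) => nu Tnu; exact: hdl.
have h2 : 0 <= sup [set inf [set dLP mu nu | mu in S] | nu in T] <= 1.
  apply: (sup_bounds (x0 := inf [set dLP mu nu0 | mu in S])); first by exists nu0.
  move=> _ [nu Tnu <-]; apply: (inf_dLP_bounds S0) => mu Smu; exact: hdl.
rewrite /dH; move/andP: h1 => [a1 b1]; move/andP: h2 => [a2 b2].
by rewrite ge_max b1 b2 andbT le_max a1.
Qed.

Lemma dH_shift m (S T T' : set (set 'rV[R]_m -> R)) (d : R) mu0 nu0 nu0' :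
  S mu0 -> T nu0 -> T' nu0' ->
  (forall mu, S mu -> good mu) -> (forall nu, T nu -> good nu) ->
  (forall nu, T' nu -> good nu) ->
  (forall nu', T' nu' -> exists2 nu, T nu & forall mu, S mu -> dLP mu nu' <= dLP mu nu + d) ->
  (forall nu, T nu -> exists2 nu', T' nu' & forall mu, S mu -> dLP mu nu' <= dLP mu nu + d) ->
  dH S T' <= dH S T + d.
Proof.
move=> S0 T0 T0' gS gT gT' H1 H2.
have lb mu (X : set (set 'rV[R]_m -> R)) : has_lbound [set dLP mu nu | nu in X].
  by exists 0 => _ [nu _ <-]; exact: dLP_ge0.
have lb' nu (X : set (set 'rV[R]_m -> R)) : has_lbound [set dLP mu nu | mu in X].
  by exists 0 => _ [mu _ <-]; exact: dLP_ge0.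
have c1 : sup [set inf [set dLP mu nu | nu in T'] | mu in S] <=
          sup [set inf [set dLP mu nu | nu in T] | mu in S] + d.
  apply: sup_shift.
  - by exists (inf [set dLP mu0 nu | nu in T']), mu0.
  - exists 1 => _ [mu Smu <-].
    have /andP[_ //] : 0 <= inf [set dLP mu nu | nu in T] <= 1.
    apply: (inf_dLP_bounds (F := fun nu => dLP mu nu) T0).
    by move=> nu Tnu; rewrite dLP_ge0 dLP_le1 //; [apply: gS | apply: gT].
  move=> _ [mu Smu <-]; exists (inf [set dLP mu nu | nu in T]); first by exists mu.
  apply: inf_shift => //; first by exists (dLP mu nu0), nu0.
  move=> _ [nu Tnu <-]; have [nu' T'nu' h] := H2 nu Tnu.
  by exists (dLP mu nu'); [exists nu' | apply: h].
have c2 : sup [set inf [set dLP mu nu | mu in S] | nu in T'] <=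
          sup [set inf [set dLP mu nu | mu in S] | nu in T] + d.
  apply: sup_shift.
  - by exists (inf [set dLP mu nu0' | mu in S]), nu0'.
  - exists 1 => _ [nu Tnu <-].
    have /andP[_ //] : 0 <= inf [set dLP mu nu | mu in S] <= 1.
    apply: (inf_dLP_bounds (F := fun mu => dLP mu nu) S0).
    by move=> mu Smu; rewrite dLP_ge0 dLP_le1 //; [apply: gS | apply: gT].
  move=> _ [nu' T'nu' <-]; have [nu Tnu h] := H1 nu' T'nu'.
  exists (inf [set dLP mu nu | mu in S]); first by exists nu.
  apply: inf_shift => //; first by exists (dLP mu0 nu), mu0.
  move=> _ [mu Smu <-].
  by exists (dLP mu nu'); [exists mu | apply: h].
rewrite /dH ge_max; apply/andP; split.
  by apply: le_trans c1 _; rewrite lerD2r le_max lexx.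
by apply: le_trans c2 _; rewrite lerD2r le_max lexx orbT.
Qed.

End DH.
Section SK.
Variable R : realType.

Lemma Sk_good n (A : 'M[R]_n) k mu : @Sk R n A k mu -> good mu.
Proof. by move=> [V _ <-]; exact: empirical_good. Qed.

Lemma Sk_0 n (A : 'M[R]_n) k : @Sk R n A k (empirical (profile_pt A 0)).
Proof. by exists 0 => // i j; rewrite mxE lerN10 ler01. Qed.

Lemma profile_agree n (B B' : 'M[R]_n) (j0 : 'I_n) k (V : 'M[R]_(k,n)) :
  (forall i j, j != j0 -> B i j = B' i j) ->
  forall j, j != j0 -> profile_pt B V j = profile_pt B' V j.
Proof.
move=> hB j hj; rewrite /profile_pt; congr (row_mx _ _); congr (_^T).
apply/matrixP => i l; rewrite !mxE; apply: eq_bigr => t _; rewrite hB //.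
Qed.

Lemma emp_pair n (B B' : 'M[R]_n) (j0 : 'I_n) k (V : 'M[R]_(k,n)) mu :
  (forall i j, j != j0 -> B i j = B' i j) -> good mu ->
  dLP mu (empirical (profile_pt B' V)) <= dLP mu (empirical (profile_pt B V)) + n%:R^-1.
Proof.
move=> hB gm; apply: dLP_shift => //; try exact: empirical_good.
- move=> U; apply: (empirical_shift (j0 := j0)) => j hj.
  symmetry; exact: (@profile_agree n B B' j0 k V hB j hj).
- move=> U; apply: (empirical_shift (j0 := j0)) => j hj.
  exact: (@profile_agree n B B' j0 k V hB j hj).
Qed.

Lemma Sk_shift n (A B B' : 'M[R]_n) (j0 : 'I_n) k :
  (forall i j, j != j0 -> B i j = B' i j) ->
  dH (@Sk R n A k) (@Sk R n B' k) <= dH (@Sk R n A k) (@Sk R n B k) + n%:R^-1.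
Proof.
move=> hB.
apply: (dH_shift (Sk_0 A k) (Sk_0 B k) (Sk_0 B' k)); try exact: Sk_good.
- move=> _ [V hV <-]; exists (empirical (profile_pt B V)); first by exists V.
  by move=> mu Smu; apply: emp_pair hB (Sk_good Smu).
- move=> _ [V hV <-]; exists (empirical (profile_pt B' V)); first by exists V.
  by move=> mu Smu; apply: emp_pair hB (Sk_good Smu).
Qed.

Lemma geo N : \sum_(0 <= k < N) (2:R) ^- k.+1 = 1 - 2 ^- N.
Proof.
elim: N => [|N IH]; first by rewrite big_geq // expr0 invr1 subrr.
rewrite big_nat_recr //= IH exprS invfM.
set a := (2:R) ^- N.
have -> : (2:R)^-1 * a = a / 2 by rewrite mulrC.
by field.
Qed.

Lemma series_bd (d : nat -> R) N : (forall k, 0 <= d k <= 1) ->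
  0 <= series (fun k => (2:R) ^- k.+1 * d k) N <= 1.
Proof.
move=> hd; rewrite /series /=; apply/andP; split.
  apply: sumr_ge0 => k _; have /andP[h _] := hd k.
  by apply: mulr_ge0 => //; rewrite invr_ge0 exprn_ge0.
apply: le_trans (_ : \sum_(0 <= k < N) (2:R) ^- k.+1 <= 1).
  apply: ler_sum => k _; have /andP[h1 h2] := hd k.
  rewrite -[leRHS]mulr1; apply: ler_wpM2l h2.
  by rewrite invr_ge0 exprn_ge0.
by rewrite geo gerBl invr_ge0 exprn_ge0.
Qed.

Lemma series_cvg (d : nat -> R) : (forall k, 0 <= d k <= 1) ->
  cvgn (series (fun k => (2:R) ^- k.+1 * d k)).
Proof.
move=> hd; apply: nondecreasing_is_cvgn.
  apply/nondecreasing_seqP => N; rewrite /series /= big_nat_recr //= lerDl.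
  have /andP[h _] := hd N.
  by apply: mulr_ge0 => //; rewrite invr_ge0 exprn_ge0.
exists 1 => _ [N _ <-]; by have /andP[] := series_bd N hd.
Qed.

Lemma lim_shift (d d' : nat -> R) (del : R) :
  (forall k, 0 <= d k <= 1) -> (forall k, 0 <= d' k <= 1) -> 0 <= del ->
  (forall k, d' k <= d k + del) ->
  limn (series (fun k => (2:R) ^- k.+1 * d' k)) <=
  limn (series (fun k => (2:R) ^- k.+1 * d k)) + del.
Proof.
move=> hd hd' d0 hdd.
have c := series_cvg hd; have c' := series_cvg hd'.
have cc : cvgn (cst del : nat -> R) by apply: is_cvg_cst.
have lc : limn (cst del : nat -> R) = del by apply: lim_cst.
rewrite -[X in _ <= _ + X]lc -limD //.
apply: ler_lim => //; first exact: is_cvgD.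
apply: nearW => N /=; rewrite /series /=.
apply: le_trans (_ : \sum_(0 <= k < N) (2:R) ^- k.+1 * (d k + del) <= _).
  apply: ler_sum => k _; apply: ler_wpM2l; first by rewrite invr_ge0 exprn_ge0.
  exact: hdd.
under eq_bigr do rewrite mulrDr.
rewrite big_split /= lerD2l -mulr_suml geo.
by rewrite ler_piMl // gerBl invr_ge0 exprn_ge0.
Qed.

Lemma dM_shift n (A B B' : 'M[R]_n) (j0 : 'I_n) :
  (forall i j, j != j0 -> B i j = B' i j) ->
  dM A B' <= dM A B + n%:R^-1.
Proof.
move=> hB; rewrite /dM; apply: lim_shift.
- move=> k; apply: (dH_bounds (Sk_0 A k.+1) (Sk_0 B k.+1)); exact: Sk_good.
- move=> k; apply: (dH_bounds (Sk_0 A k.+1) (Sk_0 B' k.+1)); exact: Sk_good.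
- by rewrite invr_ge0 ler0n.
- by move=> k; apply: Sk_shift hB.
Qed.

End SK.
Unset Implicit Arguments.

Theorem lemma11p2 (R : realType) (M : forall n : nat, 'M[R]_n)
  (hM : forall n, inMn (M n)) (eta : R) (heta : 0 < eta) :
  (fun n => P_dev (M n) eta) @ \oo --> (0 : R).
Proof.
have eta2 : 0 < eta ^+ 2 by rewrite exprn_gt0.
have key : forall n, (0 < n)%N -> P_dev (M n) eta <= n%:R^-1 / eta ^+ 2.
  move=> n n0.
  have nR : 0 < n%:R :> R by rewrite ltr0n.
  pose f := fun s : 'M[bool]_n => dM (M n) (signmx R s).
  have hf : bdiff f n%:R^-1.
    move=> s s' j0 hs.
    have hB : forall i j, j != j0 -> signmx R s i j = signmx R s' i j.
      by move=> i j hj; rewrite !mxE hs.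
    have hB' : forall i j, j != j0 -> signmx R s' i j = signmx R s i j.
      by move=> i j hj; rewrite hB.
    have h1 := dM_shift (M n) hB; have h2 := dM_shift (M n) hB'.
    rewrite /f ler_norml; apply/andP.
    move: h1 h2; generalize (dM (M n) (signmx R s)) (dM (M n) (signmx R s')).
    move=> a b h1 h2; split; lra.
  have npos : 0 < n%:R^-1 :> R by rewrite invr_gt0.
  have V := var_bound (ltW npos) hf.
  set N := #|{: 'M[bool]_(n, n)}|%:R : R.
  have Np : 0 < N by rewrite ltr0n; apply/card_gt0P; exists 0.
  have cheb : #|[pred s : 'M[bool]_n | eta < `|f s - meanT f| ]|%:R * eta ^+ 2
              <= \sum_s (f s - meanT f) ^+ 2.
    rewrite [leRHS](bigID (fun s => eta < `|f s - meanT f|)) /=.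
    apply: le_trans (_ : \sum_(s | eta < `|f s - meanT f|) (f s - meanT f) ^+ 2 <= _);
      last by rewrite lerDl sumr_ge0 // => s _; exact: sqr_ge0.
    rewrite mulrC mulr_natr -sumr_const.
    apply: ler_sum => s hs.
    rewrite -[X in _ <= X]real_normK ?num_real // !expr2.
    by apply: ler_pM; rewrite ?ltW.
  rewrite /P_dev ler_pdivrMr // mulrAC ler_pdivlMr //.
  apply: le_trans cheb _; apply: le_trans V _.
  by rewrite expr2 mulrA mulfV ?mul1r // gt_eqF.
apply/cvgr0Pnorm_lt => e e0.
near=> n.
have hn : (e * eta ^+ 2)^-1 + 1 <= n%:R by near: n; apply: nbhs_infty_ger.
have ep : 0 < (e * eta ^+ 2)^-1 by rewrite invr_gt0; apply: mulr_gt0.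
have nR : 0 < n%:R :> R by lra.
have n0 : (0 < n)%N by rewrite -(ltr0n R).
have P0 : 0 <= P_dev (M n) eta by rewrite /P_dev divr_ge0 ?ler0n.
rewrite ger0_norm //; apply: le_lt_trans (key n n0) _.
rewrite ltr_pdivrMr // invf_plt //; last by apply: mulr_gt0.
lra.
Unshelve. all: by end_near.
Qed.
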